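(* Let $w=w_1w_2\cdots w_n$ be a finite word over $\{0,1\}$ of length $n\ge 2$, and let $\hat e_w$ be the projection $\phi\mapsto\langle\phi,e_w\rangle e_w$. Then $\|K\hat e_w-\hat e_wK\|=1$, $\|L\hat e_w-\hat e_wL\|=1$, and therefore $\|[\mathcal D,\pi(\hat e_w)]\|=1$.
   Context: $\Omega=\{0,1\}^{\mathbb N}$ with the shift $\sigma$; for $a\in\{0,1\}$, $ax=(a,x_1,\dots)$. $\mu$ is the measure of maximal entropy (uniform Bernoulli product measure), $L^2(\mu)$ the real Hilbert space with inner product $\langle\cdot,\cdot\rangle$. For a finite word $v$, $[v]$ is the cylinder of sequences beginning with $v$, $\chi_{[v]}$ its indicator, $\ell(v)$ its length, and $v0,v1$ the concatenations. For a nonempty word $w$, $e_w=2^{\ell(w)/2}(\chi_{[w1]}-\chi_{[w0]})$. Ruelle operator $L\phi(x)=\frac12(\phi(0x)+\phi(1x))$; Koopman operator $K\phi=\phi\circ\sigma$. On $\mathcal H=L^2(\mu)\times L^2(\mu)$ (norm $|(\phi_1,\phi_2)|^2=|\phi_1|^2+|\phi_2|^2$), $\mathcal D=\begin{pmatrix}0&K\\ L&0\end{pmatrix}$ and $\pi(A)=\begin{pmatrix}A&0\\0&A\end{pmatrix}$ for bounded $A$ on $L^2(\mu)$; $[\mathcal D,\pi(A)]=\mathcal D\pi(A)-\pi(A)\mathcal D$. $\|\cdot\|$ is the operator norm. *)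

(* Defs.v *)
From HB Require Import structures.
From mathcomp Require Import all_boot all_order all_algebra.
From mathcomp Require Import all_classical all_reals all_analysis.
Set Implicit Arguments. Unset Strict Implicit. Unset Printing Implicit Defensive.
Import Order.TTheory GRing.Theory Num.Theory.
Local Open Scope classical_set_scope.
Local Open Scope ring_scope.

(* Finite words over {0,1} are [seq bool] (false = 0, true = 1);
   sequences x = (x_1, x_2, ...) are [nat -> bool], x_{i+1} = x i. *)

Definition cyl (v : seq bool) : set (nat -> bool) :=
  [set x | forall i : nat, (i < size v)%N -> x i = nth false v i].

Definition Omega : Type := g_sigma_algebraType (range cyl).

Definition shift (x : Omega) : Omega := fun n => x n.+1.
Definition pcons (a : bool) (x : Omega) : Omega :=
  fun n => if n is m.+1 then x m else a.

Section Ops.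
Variable R : realType.

Definition koopman (f : Omega -> R) : Omega -> R := fun x => f (shift x).
Definition ruelle (f : Omega -> R) : Omega -> R :=
  fun x => (f (pcons false x) + f (pcons true x)) / 2.

Definition e_w (w : seq bool) : Omega -> R :=
  fun x => Num.sqrt (2 ^+ size w) *
           (\1_(cyl (rcons w true)) x - \1_(cyl (rcons w false)) x).

Variable mu : {measure set Omega -> \bar R}.

Definition inner (f g : Omega -> R) : R := fine (\int[mu]_x (f x * g x)%:E).

Definition proj_e (w : seq bool) (f : Omega -> R) : Omega -> R :=
  fun x => inner f (e_w w) * e_w w x.

Definition L2norm (f : Omega -> R) : \bar R := Lnorm mu 2%:E (EFin \o f).

Definition opnorm (T : (Omega -> R) -> (Omega -> R)) : \bar R :=
  ereal_sup [set L2norm (T f) | f in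
     [set f : Omega -> R | measurable_fun [set: Omega] f /\ (L2norm f <= 1)%E]].

Definition comm (A B : (Omega -> R) -> (Omega -> R)) (f : Omega -> R) :
  Omega -> R := fun x => A (B f) x - B (A f) x.

Definition Hnorm (p : (Omega -> R) * (Omega -> R)) : \bar R :=
  ((L2norm p.1 `^ 2%R) + (L2norm p.2 `^ 2%R)) `^ (2^-1)%R.

Definition opnormH
    (T : (Omega -> R) * (Omega -> R) -> (Omega -> R) * (Omega -> R)) : \bar R :=
  ereal_sup [set Hnorm (T p) | p in
     [set p : (Omega -> R) * (Omega -> R) |
        [/\ measurable_fun [set: Omega] p.1, measurable_fun [set: Omega] p.2
          & (Hnorm p <= 1)%E]]].

(** D = [[0, K], [L, 0]] and pi(A) = diag(A, A) *)
Definition Dop (p : (Omega -> R) * (Omega -> R)) : (Omega -> R) * (Omega -> R) :=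
  (koopman p.2, ruelle p.1).
Definition piop (A : (Omega -> R) -> (Omega -> R))
    (p : (Omega -> R) * (Omega -> R)) : (Omega -> R) * (Omega -> R) :=
  (A p.1, A p.2).

Definition Dcomm (A : (Omega -> R) -> (Omega -> R))
    (p : (Omega -> R) * (Omega -> R)) : (Omega -> R) * (Omega -> R) :=
  let q := Dop (piop A p) in let r := piop A (Dop p) in
  (fun x => q.1 x - r.1 x, fun x => q.2 x - r.2 x).

End Ops.

(* Main.v *)
From Pilot Require Import Defs.
From HB Require Import structures.
From mathcomp Require Import all_boot all_order all_algebra.
From mathcomp Require Import all_classical all_reals all_analysis.
From mathcomp Require Import ring lra.
From mathcomp Require Import measurable_realfun.
Set Implicit Arguments. Unset Strict Implicit. Unset Printing Implicit Defensive.
Import Order.TTheory GRing.Theory Num.Theory.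
Import Pilot.Defs.
Local Open Scope classical_set_scope.
Local Open Scope ring_scope.


Lemma cyl_meas (v : seq bool) : measurable (cyl v : set Omega).
Proof. by apply: sub_sigma_algebra; exists v. Qed.

Lemma cyl_nil : cyl [::] = [set: Omega].
Proof. by apply/seteqP; split => // x _ i. Qed.

Lemma cyl_cons h v (y : Omega) : cyl (h :: v) y <-> (y 0%N = h /\ cyl v (shift y)).
Proof.
split.
  by move=> H; split; [exact: (H 0%N)|move=> i hi; exact: (H i.+1)].
by move=> [H0 H] [|i] hi //=; exact: H.
Qed.

Definition flip (x : Omega) : Omega := fun n => if n is 0%N then ~~ x 0%N else x n.

Lemma preimage_shift v : shift @^-1` cyl v = cyl (false :: v) `|` cyl (true :: v).
Proof.
apply/seteqP; split => x /=.
  by case hx: (x 0%N) => H; [right|left]; apply/cyl_cons.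
by case=> /cyl_cons [].
Qed.

Lemma preimage_flip h v : flip @^-1` cyl (h :: v) = cyl (~~ h :: v).
Proof.
apply/seteqP; split => x /= /cyl_cons [H1 H2]; apply/cyl_cons; (split; last exact: H2).
  by move: H1; rewrite /flip => <-; rewrite negbK.
by rewrite /flip /= H1 negbK.
Qed.

Lemma preimage_pcons a h v : pcons a @^-1` cyl (h :: v) = if a == h then cyl v else set0.
Proof.
apply/seteqP; split => x /=.
  by move=> /cyl_cons [/= -> H]; rewrite eqxx.
by case: eqP => [<- H|//]; apply/cyl_cons.
Qed.

Lemma measurable_pre (f : Omega -> Omega) :
  (forall v, measurable (f @^-1` cyl v)) -> measurable_fun [set: Omega] f.
Proof.
move=> H; apply: (@measurability _ _ _ _ _ f (range cyl)) => //.
by move=> _ [_ [v _ <-] <-]; rewrite setTI; exact: H.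
Qed.

Lemma shift_meas : measurable_fun [set: Omega] shift.
Proof. apply: measurable_pre => v; rewrite preimage_shift; apply: measurableU; exact: cyl_meas. Qed.

Lemma flip_meas : measurable_fun [set: Omega] flip.
Proof.
apply: measurable_pre => -[|h v]; last by rewrite preimage_flip; exact: cyl_meas.
by rewrite cyl_nil preimage_setT.
Qed.

Lemma pcons_meas a : measurable_fun [set: Omega] (pcons a).
Proof.
apply: measurable_pre => -[|h v]; first by rewrite cyl_nil preimage_setT.
by rewrite preimage_pcons; case: eqP => _; [exact: cyl_meas|].
Qed.


Lemma cylI (u v : seq bool) :
  cyl u `&` cyl v = set0 \/ exists t, cyl u `&` cyl v = cyl t.
Proof.
elim: u v => [|h u IH] v.
  by right; exists v; rewrite cyl_nil setTI.
case: v => [|k v].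
  by right; exists (h :: u); rewrite cyl_nil setIT.
have [<-|hk] := eqVneq h k.
  case: (IH v) => [H|[t H]]; [left|right; exists (h :: t)];
  apply/seteqP; split => x.
  - move=> [/cyl_cons [_ H1] /cyl_cons [_ H2]].
    by have : (cyl u `&` cyl v) (shift x) by [] ; rewrite H.
  - by [].
  - move=> [/cyl_cons [H0 H1] /cyl_cons [_ H2]]; apply/cyl_cons; split => //.
    by rewrite -H.
  - move=> /cyl_cons [H0 H1]; have : (cyl u `&` cyl v) (shift x) by rewrite H.
    by move=> [H2 H3]; split; apply/cyl_cons.
left; apply/seteqP; split => x //.
move=> [/cyl_cons [H0 _] /cyl_cons [H1 _]].
by move: hk; rewrite -H0 -H1 eqxx.
Qed.

Definition Gcyl : set (set Omega) := [set A | A = set0 \/ range cyl A].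

Lemma mGcyl : measurable = <<s Gcyl >>.
Proof.
apply/seteqP; split.
  apply: sub_sigma_algebra2 => A HA; by right.
apply: smallest_sub; first exact: smallest_sigma_algebra.
move=> A [->|HA]; first exact: sigma_algebra0.
exact: sub_sigma_algebra.
Qed.

Lemma setI_Gcyl : setI_closed Gcyl.
Proof.
move=> A B [->|[u _ <-]]; first by left; rewrite set0I.
move=> [->|[v _ <-]]; first by left; rewrite setI0.
by case: (cylI u v) => [H|[t H]]; [left|right; exists t].
Qed.

Lemma cyl_unique (R : realType) (m1 m2 : {measure set Omega -> \bar R}) :
  (m1 [set: Omega] < +oo)%E ->
  (forall v, m1 (cyl v) = m2 (cyl v)) ->
  forall A, measurable A -> m1 A = m2 A.
Proof.
move=> fin H A mA.
apply: (@measure_unique _ _ _ Gcyl (fun=> [set: Omega])) => //.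
- exact: mGcyl.
- exact: setI_Gcyl.
- by move=> _; right; exists [::] => //; rewrite cyl_nil.
- by rewrite bigcup_const.
- by move=> B [->|[v _ <-]]; [rewrite !measure0|].
Qed.

Section Meas.
Variable R : realType.
Variable mu : {measure set Omega -> \bar R}.
Hypothesis hmu : forall v : seq bool, mu (cyl v) = ((2 : R) ^- size v)%:E.

Lemma muT : mu [set: Omega] = 1%E.
Proof. by rewrite -cyl_nil hmu /= expr0 invr1. Qed.

Lemma mu_shift A : measurable A -> mu (shift @^-1` A) = mu A.
Proof.
move=> mA.
have := @cyl_unique R
  (measure_function_pushforward__canonical__measure_function_Measure mu shift_meas) mu.
apply => //.
  by rewrite /= /pushforward preimage_setT muT ltry.
move=> v /=; rewrite /pushforward preimage_shift measureU; first last.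
- by apply/seteqP; split => x // [/cyl_cons [H1 _] /cyl_cons [H2 _]]; rewrite H1 in H2.
- exact: cyl_meas.
- exact: cyl_meas.
rewrite !hmu /=. have h1 := hmu (false :: v). have h2 := hmu (true :: v). rewrite /= in h1 h2. rewrite h1 h2 -EFinD; congr (_%:E).
rewrite exprS invfM; field; exact: expf_neq0.
Qed.

Lemma mu_flip A : measurable A -> mu (flip @^-1` A) = mu A.
Proof.
move=> mA.
have := @cyl_unique R
  (measure_function_pushforward__canonical__measure_function_Measure mu flip_meas) mu.
apply => //.
  by rewrite /= /pushforward preimage_setT muT ltry.
move=> [|h v] /=; rewrite /pushforward.
  by rewrite cyl_nil preimage_setT.
by rewrite preimage_flip !hmu.
Qed.

End Meas.


Section Push.
Variable R : realType.
Variable mu : {measure set Omega -> \bar R}.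
Variable phi : Omega -> Omega.
Hypothesis mphi : measurable_fun [set: Omega] phi.
Hypothesis pres : forall A, measurable A -> mu (phi @^-1` A) = mu A.

Let pm := measure_function_pushforward__canonical__measure_function_Measure mu mphi.

Let int_pm D (G : Omega -> \bar R) :
  (\int[pushforward mu phi]_(x in D) G x = \int[mu]_(x in D) G x)%E.
Proof.
have := @eq_measure_integral _ _ _ D mu pm G.
by apply => A mA _; rewrite /= /pushforward pres.
Qed.

Lemma push_ge0 (D : set Omega) (G : Omega -> \bar R) : measurable D ->
  measurable_fun [set: Omega] G -> (forall x, (0 <= G x)%E) ->
  (\int[mu]_(x in phi @^-1` D) G (phi x) = \int[mu]_(x in D) G x)%E.
Proof.
move=> mD mG G0; rewrite -(int_pm D G).
symmetry; apply: (ge0_integral_pushforward mphi mu mD) => //.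
exact: measurable_funTS.
Qed.

Lemma push_int (D : set Omega) (G : Omega -> \bar R) : measurable D ->
  measurable_fun [set: Omega] G -> mu.-integrable D G ->
  mu.-integrable (phi @^-1` D) (G \o phi) /\
  (\int[mu]_(x in phi @^-1` D) G (phi x) = \int[mu]_(x in D) G x)%E.
Proof.
move=> mD mG iG.
have mGphi : measurable_fun [set: Omega] (G \o phi) by exact: measurableT_comp.
have iGphi : mu.-integrable (phi @^-1` D) (G \o phi).
  apply/integrableP; split; first exact: measurable_funTS.
  rewrite (push_ge0 (G := abse \o G)) //; last by move=> x; exact: abse_ge0.
  - by move/integrableP : iG => [].
  - exact: measurableT_comp.
split => //.
by rewrite -(int_pm D G); symmetry; apply: (integral_pushforward mphi mG iGphi mD).
Qed.

End Push.


Lemma cyl01 : cyl [:: false] `|` cyl [:: true] = [set: Omega].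
Proof. by rewrite -preimage_shift cyl_nil preimage_setT. Qed.

Lemma cyl01_disj : [disjoint cyl [:: false] & cyl [:: true]].
Proof.
apply/disj_set2P; apply/seteqP; split => x //.
by move=> [/cyl_cons [H1 _] /cyl_cons [H2 _]]; rewrite H1 in H2.
Qed.

Section Half.
Variable R : realType.
Variable mu : {measure set Omega -> \bar R}.
Hypothesis hmu : forall v : seq bool, mu (cyl v) = ((2 : R) ^- size v)%:E.

Lemma shift_half (G : Omega -> \bar R) (a : bool) :
  measurable_fun [set: Omega] G ->
  (forall x, (0 <= G x)%E) \/ mu.-integrable [set: Omega] G ->
  (\int[mu]_(x in cyl [:: a]) G (shift x) + \int[mu]_(x in cyl [:: a]) G (shift x)
   = \int[mu]_x G x)%E.
Proof.
move=> mG hG.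
have mH : measurable_fun [set: Omega] (G \o shift) by exact: measurableT_comp mG shift_meas.
have e1 : (\int[mu]_x G (shift x) = \int[mu]_x G x)%E.
  case: hG => [G0|iG].
    have := push_ge0 shift_meas (mu_shift hmu) measurableT mG G0.
    by rewrite preimage_setT.
  have [_ <-] := push_int shift_meas (mu_shift hmu) measurableT mG iG.
  by rewrite preimage_setT.
have iH : (forall x, (0 <= G x)%E) \/ mu.-integrable [set: Omega] (G \o shift).
  case: hG => [G0|iG]; [by left|right].
  have [+ _] := push_int shift_meas (mu_shift hmu) measurableT mG iG.
  by rewrite preimage_setT.
have e2 : (\int[mu]_(x in cyl [:: true]) G (shift x) =
           \int[mu]_(x in cyl [:: false]) G (shift x))%E.
  have := preimage_flip false [::]; rewrite /= => <-.
  case: iH => [G0|iG].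
    exact: (push_ge0 flip_meas (mu_flip hmu) (cyl_meas [:: false]) mH (fun x => G0 (shift x))).
  have iG' : mu.-integrable (cyl [:: false]) (G \o shift).
    exact: (integrableS measurableT (cyl_meas _) (@subsetT _ _) iG).
  by have [_ H] := push_int flip_meas (mu_flip hmu) (cyl_meas [:: false]) mH iG'; exact: H.
rewrite -e1 -cyl01 integral_setU //; first last.
- exact: cyl01_disj.
- exact: measurable_funTS.
- exact: cyl_meas.
- exact: cyl_meas.
by case: a; rewrite e2.
Qed.

End Half.


Lemma absM_le (R : realType) (a b : R) : `|a * b| <= a ^+ 2 + b ^+ 2.
Proof.
rewrite normrM. have := sqr_ge0 (`|a| - `|b|).
rewrite -(real_normK (num_real a)) -(real_normK (num_real b)).
have := normr_ge0 a. have := normr_ge0 b. nra.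
Qed.

Section L2.
Variable R : realType.
Variable mu : {measure set Omega -> \bar R}.

Definition L2 (f : Omega -> R) := measurable_fun [set: Omega] f /\
  mu.-integrable [set: Omega] (fun x => (f x ^+ 2)%:E).

Lemma mlin (a b : R) (f g : Omega -> R) :
  measurable_fun [set: Omega] f -> measurable_fun [set: Omega] g ->
  measurable_fun [set: Omega] (fun x => a * f x + b * g x).
Proof.
move=> mf mg; apply: measurable_funD; apply: measurable_funM => //;
exact: measurable_cst.
Qed.

Lemma L2_int (f g : Omega -> R) : L2 f -> L2 g ->
  mu.-integrable [set: Omega] (fun x => (f x * g x)%:E).
Proof.
move=> [mf if2] [mg ig2].
apply: (le_integrable measurableT (g := fun x => ((f x ^+ 2)%:E + (g x ^+ 2)%:E)%E)) => //.
- by apply/measurable_EFinP; exact: measurable_funM.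
- move=> x _ /=; rewrite lee_fin.
  rewrite (ger0_norm (_ : 0 <= f x ^+ 2 + g x ^+ 2)); first exact: absM_le.
  by rewrite addr_ge0 // sqr_ge0.
- exact: (@integrableD _ _ _ mu _ measurableT _ _ if2 ig2).
Qed.

Lemma L2_lin (a b : R) (f g : Omega -> R) : L2 f -> L2 g ->
  L2 (fun x => a * f x + b * g x).
Proof.
move=> Lf Lg; split; first exact: mlin Lf.1 Lg.1.
have i1 := L2_int Lf Lf; have i2 := L2_int Lf Lg; have i3 := L2_int Lg Lg.
pose F := fun x => ((a ^+ 2)%:E * (f x * f x)%:E + ((2 * a * b)%:E * (f x * g x)%:E
   + (b ^+ 2)%:E * (g x * g x)%:E))%E.
apply: (@eq_integrable _ _ _ mu _ measurableT F).
  by move=> x _; rewrite /F -!EFinM -!EFinD; congr (_%:E); ring.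
rewrite /F; apply: (integrableD measurableT); first exact: (integrableZl measurableT).
by apply: (integrableD measurableT); exact: (integrableZl measurableT).
Qed.

Lemma L2_cst0 : L2 (fun=> 0).
Proof.
split; first exact: measurable_cst.
apply: (@eq_integrable _ _ _ mu _ measurableT (cst 0%E)).
  by move=> x _; rewrite expr0n.
exact: integrable0.
Qed.

Lemma ip_lin (a b : R) (f g h : Omega -> R) : L2 f -> L2 g -> L2 h ->
  inner mu (fun x => a * f x + b * g x) h = a * inner mu f h + b * inner mu g h.
Proof.
move=> Lf Lg Lh.
have i1 := L2_int Lf Lh; have i2 := L2_int Lg Lh.
rewrite /inner.
rewrite (eq_integral (fun x => (a * (f x * h x) + b * (g x * h x))%:E)); last first.
  by move=> x _; congr (_%:E); ring.
change (Rintegral mu setT (fun x => a * (f x * h x) + b * (g x * h x)) =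
   a * Rintegral mu setT (fun x => f x * h x) + b * Rintegral mu setT (fun x => g x * h x)).
rewrite RintegralD //; first last.
- exact: (integrableZl measurableT b i2).
- exact: (integrableZl measurableT a i1).
by rewrite !RintegralZl.
Qed.

Lemma ip_sym (f g : Omega -> R) : inner mu f g = inner mu g f.
Proof. by rewrite /inner; congr fine; apply: eq_integral => x _; rewrite mulrC. Qed.

Lemma ip_lin_r (a b : R) (f g h : Omega -> R) : L2 f -> L2 g -> L2 h ->
  inner mu h (fun x => a * f x + b * g x) = a * inner mu h f + b * inner mu h g.
Proof. by move=> *; rewrite ip_sym ip_lin // (ip_sym f) (ip_sym g). Qed.

Lemma ip_ge0 (f : Omega -> R) : 0 <= inner mu f f.
Proof. by apply: fine_ge0; apply: integral_ge0 => x _; rewrite lee_fin -expr2 sqr_ge0. Qed.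

Lemma ip_sq (f : Omega -> R) : L2 f ->
  (\int[mu]_x ((f x) ^+ 2)%:E)%E = (inner mu f f)%:E.
Proof.
move=> Lf; rewrite /inner fineK.
  by apply: eq_integral => x _; rewrite expr2.
have := integrable_fin_num measurableT Lf.2.
by under eq_integral do rewrite expr2.
Qed.

Lemma abs_pow2 (r : R) : (`|r%:E| `^ 2%:R)%E = (r ^+ 2)%:E.
Proof.
by rewrite abse_EFin poweR_EFin powR_mulrn // -(real_normK (num_real r)).
Qed.

Lemma L2norm_ip (f : Omega -> R) : L2 f ->
  L2norm mu f = (Num.sqrt (inner mu f f))%:E.
Proof.
move=> Lf; rewrite /L2norm unlock.
rewrite (eq_integral (fun x => ((f x)^+2)%:E)); last by move=> x _; exact: abs_pow2.
by rewrite ip_sq // poweR_EFin powR12_sqrt // ip_ge0.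
Qed.

Lemma L2_of_norm (f : Omega -> R) : measurable_fun [set: Omega] f ->
  (L2norm mu f <= 1)%E -> L2 f /\ inner mu f f <= 1.
Proof.
move=> mf; rewrite /L2norm unlock.
rewrite (eq_integral (fun x => ((f x)^+2)%:E)); last by move=> x _; exact: abs_pow2.
have mf2 : measurable_fun [set: Omega] (fun x => (f x ^+ 2)%:E).
  by apply/measurable_EFinP; exact: measurable_funX.
have ge0 : (0 <= \int[mu]_x ((f x) ^+ 2)%:E)%E.
  by apply: integral_ge0 => x _; rewrite lee_fin sqr_ge0.
have iL : (\int[mu]_x ((f x) ^+ 2)%:E < +oo)%E -> L2 f.
  move=> lt; split => //; apply/integrableP; split => //.
  rewrite (eq_integral (fun x => ((f x)^+2)%:E)) // => x _; by rewrite abse_EFin ger0_norm ?sqr_ge0.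
case hI : (\int[mu]_x ((f x) ^+ 2)%:E)%E ge0 => [r| |] // r0.
  rewrite poweR_EFin powR12_sqrt // lee_fin -{1}sqrtr1 ler_sqrt // => r1.
  have Lf : L2 f by apply: iL; rewrite hI ltry.
  split => //.
  by move: hI r1; rewrite ip_sq // => -[->].
by rewrite poweRyr // leye_eq.
Qed.

End L2.


Section Alg.
Variable R : realType.
Variable mu : {measure set Omega -> \bar R}.
Local Notation ip := (inner mu).
Local Notation L2 := (L2 mu).

Lemma ip_comb2 (a b : R) (u v : Omega -> R) : L2 u -> L2 v ->
  ip (fun x => a * u x + b * v x) (fun x => a * u x + b * v x) =
  a ^+ 2 * ip u u + 2 * a * b * ip u v + b ^+ 2 * ip v v.
Proof.
move=> Lu Lv; have Lw := L2_lin a b Lu Lv.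
rewrite ip_lin // !ip_lin_r // (@ip_sym _ mu v u); ring.
Qed.

Lemma bessel (f e1 e2 : Omega -> R) (s : R) : L2 f -> L2 e1 -> L2 e2 ->
  ip e1 e1 = 1 -> ip e2 e2 = s -> 0 < s -> ip e1 e2 = 0 ->
  ip f e1 ^+ 2 + ip f e2 ^+ 2 / s <= ip f f.
Proof.
move=> Lf L1 L2' h11 h22 s0 h12.
set a := ip f e1; set b := ip f e2.
pose g := fun x => 1 * f x + (- a) * e1 x.
have Lg : L2 g := L2_lin 1 (- a) Lf L1.
have := ip_ge0 mu (fun x => 1 * g x + (- (b / s)) * e2 x).
rewrite ip_comb2 // /g ip_comb2 // ip_lin // h11 h22 h12 -/a -/b.
have -> : 1 ^+ 2 * (1 ^+ 2 * ip f f + 2 * 1 * - a * a + (- a) ^+ 2 * 1) +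
  2 * 1 * - (b / s) * (1 * b + - a * 0) + (- (b / s)) ^+ 2 * s =
  ip f f - a ^+ 2 - b ^+ 2 / s.
  by field; rewrite gt_eqF.
move=> H; lra.
Qed.

End Alg.


Lemma cyl_rcons_disj (u : seq bool) (x : Omega) :
  cyl (rcons u true) x -> cyl (rcons u false) x -> False.
Proof.
move=> H1 H2.
have := H1 (size u); have := H2 (size u).
rewrite !size_rcons !ltnSn !nth_rcons ltnn eqxx. move=> A B. by move: (A isT) (B isT) => ->.
Qed.

Lemma cyl_take (u v : seq bool) t (x : Omega) : (size v <= size u)%N ->
  v = take (size v) u -> cyl (rcons u t) x -> cyl v x.
Proof.
move=> hs hv H i hi.
rewrite H ?size_rcons; last by apply: (leq_trans hi); exact: leqW.
by rewrite nth_rcons (leq_trans hi hs) [in RHS]hv nth_take.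
Qed.

Lemma cyl_ntake (u v : seq bool) t (x : Omega) : (size v <= size u)%N ->
  v <> take (size v) u -> cyl (rcons u t) x -> ~ cyl v x.
Proof.
move=> hs hv H Hv; apply: hv.
apply: (@eq_from_nth _ false); first by rewrite size_takel.
move=> i hi; rewrite nth_take // -Hv //.
rewrite H ?size_rcons; last by apply: (leq_trans hi); exact: leqW.
by rewrite nth_rcons (leq_trans hi hs).
Qed.

Section Concrete.
Variable R : realType.
Variable mu : {measure set Omega -> \bar R}.
Hypothesis hmu : forall v : seq bool, mu (cyl v) = ((2 : R) ^- size v)%:E.
Local Notation ip := (inner mu).
Local Notation L2 := (L2 mu).
Local Notation I v := (\1_(cyl v) : Omega -> R).

Lemma mI v : measurable_fun [set: Omega] (I v).
Proof. by apply: measurable_indic; exact: cyl_meas. Qed.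

Lemma intI v : mu.-integrable [set: Omega] (fun x => (I v x)%:E).
Proof.
apply/integrableP; split; first by apply/measurable_EFinP; exact: mI.
rewrite (eq_integral (fun x => (I v x)%:E)); last first.
  by move=> x _; rewrite abse_EFin ger0_norm.
by rewrite integral_indic ?setIT ?hmu ?ltry //; exact: cyl_meas.
Qed.

Lemma RintI v : Rintegral mu [set: Omega] (I v) = 2 ^- size v.
Proof.
rewrite /Rintegral integral_indic ?setIT; last exact: cyl_meas.
  by have := hmu v; move=> ->.
done.
Qed.

Lemma L2I v : L2 (I v).
Proof.
split; first exact: mI.
apply: (@eq_integrable _ _ _ mu _ measurableT (fun x => (I v x)%:E)); last exact: intI.
by move=> x _; rewrite !indicE; case: (x \in cyl v); rewrite ?expr1n ?expr0n.
Qed.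

Definition hw (u : seq bool) : Omega -> R :=
  fun x => 1 * I (rcons u true) x + (-1) * I (rcons u false) x.

Lemma L2hw u : L2 (hw u).
Proof. exact: L2_lin (L2I _) (L2I _). Qed.

Lemma ip_hw u : ip (hw u) (hw u) = 2 ^- size u.
Proof.
rewrite /inner (eq_integral (fun x => (I (rcons u true) x + I (rcons u false) x)%:E)).
  change (Rintegral mu setT (fun x => I (rcons u true) x + I (rcons u false) x) = 2 ^- size u).
  rewrite RintegralD //; try exact: intI.
  rewrite !RintI !size_rcons exprS invfM; field; exact: expf_neq0.
move=> x _; congr (_%:E); rewrite /hw !indicE.
case: (boolP (x \in cyl (rcons u true))) => [/set_mem H1|_];
case: (boolP (x \in cyl (rcons u false))) => [/set_mem H2|_] //=; try ring.
by case: (cyl_rcons_disj H1 H2).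
Qed.

Lemma ip_hw_I u v : (size v <= size u)%N -> ip (hw u) (I v) = 0.
Proof.
move=> hs.
have [hv|hv] := pselect (v = take (size v) u).
  rewrite /inner (eq_integral (fun x => (hw u x)%:E)).
    change (Rintegral mu setT (fun x => 1 * I (rcons u true) x + (-1) * I (rcons u false) x) = 0).
    rewrite RintegralD //; try exact: (integrableZl measurableT _ (intI _)).
    rewrite !RintegralZl //; try exact: intI.
    by rewrite !RintI !size_rcons; ring.
  move=> x _; congr (_%:E); rewrite /hw !indicE.
  case: (boolP (x \in cyl (rcons u true))) => [/set_mem H1|_].
    by rewrite (mem_set (cyl_take hs hv H1)) mulr1.
  case: (boolP (x \in cyl (rcons u false))) => [/set_mem H2|_].
    by rewrite (mem_set (cyl_take hs hv H2)) mulr1.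
  by rewrite !mulr0 addr0 mul0r.
rewrite /inner (eq_integral (fun x => 0%:E)).
  by rewrite integral0.
move=> x _; congr (_%:E); rewrite /hw !indicE.
case: (boolP (x \in cyl v)) => [/set_mem H|_]; last by rewrite mulr0.
case: (boolP (x \in cyl (rcons u true))) => [/set_mem H1|_].
  by case: (cyl_ntake hs hv H1 H).
case: (boolP (x \in cyl (rcons u false))) => [/set_mem H2|_].
  by case: (cyl_ntake hs hv H2 H).
by rewrite !mulr0 addr0 mul0r.
Qed.

End Concrete.


Lemma indic_cons (R : realType) h v (x : Omega) :
  (\1_(cyl (h :: v)) x : R) = \1_(cyl [:: h]) x * \1_(cyl v) (shift x).
Proof.
rewrite !indicE.
have E : cyl (h :: v) x <-> cyl [:: h] x /\ cyl v (shift x).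
  split; first by move=> /cyl_cons [H0 H1]; split => //; apply/cyl_cons; split => // i.
  by move=> [/cyl_cons [H0 _] H1]; apply/cyl_cons.
case: (pselect (cyl [:: h] x)) => H1; case: (pselect (cyl v (shift x))) => H2.
- by rewrite !mem_set ?mulr1 //; apply/E.
- rewrite (memNset H2) mulr0 memNset //; by move/E => [].
- rewrite (memNset H1) mul0r memNset //; by move/E => [].
- rewrite (memNset H1) mul0r memNset //; by move/E => [].
Qed.

Lemma indic_pcons (R : realType) t h v (x : Omega) :
  (\1_(cyl (h :: v)) (pcons t x) : R) = (t == h)%:R * \1_(cyl v) x.
Proof.
rewrite !indicE.
have E : cyl (h :: v) (pcons t x) <-> t = h /\ cyl v x.
  split; first by move=> /cyl_cons [H0 H1].
  by move=> [H0 H1]; apply/cyl_cons.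
case: eqP => th.
  case: (pselect (cyl v x)) => H.
    by rewrite !mem_set ?mul1r //; apply/E.
  by rewrite !memNset ?mulr0 //; move/E => [].
by rewrite mul0r memNset //; move/E => [].
Qed.

Lemma ereal_half (R : realType) (X : \bar R) (y : R) : (X + X = y%:E)%E -> X = (y / 2)%:E.
Proof.
case: X => [r H| |] //.
by case: H => <-; congr (_%:E); field.
Qed.

Section Dual.
Variable R : realType.
Variable mu : {measure set Omega -> \bar R}.
Hypothesis hmu : forall v : seq bool, mu (cyl v) = ((2 : R) ^- size v)%:E.
Local Notation ip := (inner mu).
Local Notation L2 := (L2 mu).
Local Notation I v := (\1_(cyl v) : Omega -> R).

Lemma int_restr (A : set Omega) (g : Omega -> R) :
  (\int[mu]_(x in A) (g x)%:E = \int[mu]_x (\1_A x * g x)%:E)%E.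
Proof.
rewrite integral_mkcond; apply: eq_integral => x _.
rewrite patchE indicE; case: (x \in A); by rewrite ?mul1r ?mul0r.
Qed.

Lemma int_half_real (g : Omega -> R) (a : bool) : measurable_fun setT g ->
  mu.-integrable setT (EFin \o g) ->
  Rintegral mu setT (fun x => I [:: a] x * g (shift x)) = Rintegral mu setT g / 2.
Proof.
move=> mg ig.
have := @shift_half R mu hmu (EFin \o g) a (proj2 (measurable_EFinP _ _) mg) (or_intror ig).
rewrite (_ : (\int[mu]_(x in cyl [:: a]) (EFin \o g) (shift x))%E =
   (\int[mu]_x (I [:: a] x * g (shift x))%:E)%E); last exact: (int_restr _ (g \o shift)).
move=> H; rewrite /Rintegral.
have fin := integrable_fin_num measurableT ig.
rewrite -(fineK fin) in H.
by rewrite (ereal_half H).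
Qed.

Lemma int_shift_I (g : Omega -> R) (a : bool) : measurable_fun setT g ->
  mu.-integrable setT (EFin \o g) ->
  mu.-integrable setT (fun x => (I [:: a] x * g (shift x))%:E).
Proof.
move=> mg ig.
have [+ _] := push_int shift_meas (mu_shift hmu) measurableT (proj2 (measurable_EFinP _ _) mg) ig.
rewrite preimage_setT => ig'.
apply: (le_integrable measurableT (g := (EFin \o g) \o shift)) => //.
  apply/measurable_EFinP; apply: measurable_funM; first exact: mI.
  exact: measurableT_comp mg shift_meas.
move=> x _ /=; rewrite lee_fin normrM indicE.
by case: (x \in _); rewrite ?normr1 ?normr0 ?mul1r ?mul0r.
Qed.

Lemma L2_scale (k : R) (f : Omega -> R) : L2 f -> L2 (fun x => k * f x).
Proof.
move=> Lf; have := L2_lin k 0 Lf Lf.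
by rewrite (_ : (fun x => k * f x + 0 * f x) = (fun x => k * f x)) //; apply: funext => x; ring.
Qed.

Lemma ipZl (k : R) (f g : Omega -> R) : L2 f -> L2 g ->
  ip (fun x => k * f x) g = k * ip f g.
Proof.
move=> Lf Lg; have := ip_lin k 0 Lf Lf Lg.
rewrite (_ : (fun x => k * f x + 0 * f x) = (fun x => k * f x)); last by apply: funext => x; ring.
by move=> ->; ring.
Qed.

Lemma ipZr (k : R) (f g : Omega -> R) : L2 f -> L2 g ->
  ip g (fun x => k * f x) = k * ip g f.
Proof. by move=> Lf Lg; rewrite ip_sym ipZl // ip_sym. Qed.

Lemma pcons_shift (y : Omega) a : y 0%N = a -> pcons a (shift y) = y.
Proof. by move=> ya; apply: funext => -[|n] //=. Qed.

Lemma L2_pcons (f : Omega -> R) (a : bool) : L2 f -> L2 (fun x => f (pcons a x)).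
Proof.
move=> [mf if2].
have mfa : measurable_fun setT (fun x => f (pcons a x)) by exact: measurableT_comp mf (pcons_meas a).
split => //.
have mG : measurable_fun setT (fun x => (f (pcons a x) ^+ 2)%:E).
  by apply/measurable_EFinP; exact: measurable_funX.
have G0 : forall x, (0 <= (f (pcons a x) ^+ 2)%:E)%E by move=> x; rewrite lee_fin sqr_ge0.
have := @shift_half R mu hmu (fun x => (f (pcons a x) ^+ 2)%:E) a mG (or_introl G0).
rewrite (_ : (\int[mu]_(x in cyl [:: a]) (f (pcons a (shift x)) ^+ 2)%:E)%E =
    (\int[mu]_(x in cyl [:: a]) (f x ^+ 2)%:E)%E); last first.
  apply: eq_integral => y /set_mem /cyl_cons [ya _]; by rewrite pcons_shift.
move=> H; apply/integrableP; split => //.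
rewrite (eq_integral (fun x => (f (pcons a x) ^+ 2)%:E)); last first.
  by move=> x _; rewrite abse_EFin ger0_norm // sqr_ge0.
rewrite -H.
have le : (\int[mu]_(x in cyl [:: a]) (f x ^+ 2)%:E <= \int[mu]_x (f x ^+ 2)%:E)%E.
  apply: ge0_subset_integral => //; first exact: cyl_meas.
  - by apply/measurable_EFinP; exact: measurable_funX.
  - by move=> x _; rewrite lee_fin sqr_ge0.
have fin : (\int[mu]_x (f x ^+ 2)%:E < +oo)%E.
  move/integrableP : if2 => [_].
  rewrite (eq_integral (fun x => (f x ^+ 2)%:E)) //.
  by move=> x _; rewrite abse_EFin ger0_norm // sqr_ge0.
by rewrite lte_add_pinfty // (le_lt_trans le fin).
Qed.

Lemma int_half_real2 (g : Omega -> R) (a : bool) : measurable_fun setT g ->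
  mu.-integrable setT (EFin \o g) ->
  (Rintegral mu setT (fun x => I [:: a] x * g (shift x)) = Rintegral mu setT g / 2) /\
  mu.-integrable setT (fun x => (I [:: a] x * g (shift x))%:E).
Proof. by move=> mg ig; split; [exact: int_half_real|exact: int_shift_I]. Qed.

Section W.
Variables (w1 : bool) (w' : seq bool).
Local Notation w := (w1 :: w').
Local Notation e := (@e_w R w).
Local Notation c := (Num.sqrt (2 ^+ size w) : R).

Lemma e_hw : e = fun x => c * hw R w x.
Proof. by apply: funext => x; rewrite /e_w /hw; ring. Qed.

Lemma e_split x : e x = c * (I [:: w1] x * hw R w' (shift x)).
Proof. by rewrite /e_w !rcons_cons (indic_cons R w1 (rcons w' true)) (indic_cons R w1 (rcons w' false)) /hw; ring. Qed.

Lemma ruelle_e : ruelle e = fun x => (c / 2) * hw R w' x.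
Proof.
apply: funext => x; rewrite /ruelle /e_w !rcons_cons !indic_pcons /hw.
by case: w1 => /=; ring.
Qed.

Lemma L2e : L2 e.
Proof. by rewrite e_hw; apply: L2_scale; exact: L2hw. Qed.

Lemma L2b : L2 (ruelle e).
Proof. by rewrite ruelle_e; apply: L2_scale; exact: L2hw. Qed.

Lemma c2 : c ^+ 2 = 2 ^+ size w.
Proof. by rewrite sqr_sqrtr // exprn_ge0. Qed.

Lemma ip_ee : ip e e = 1.
Proof.
rewrite e_hw ipZl ?ipZr ?ip_hw //; try exact: L2hw; try exact: L2_scale (L2hw hmu _).
by rewrite mulrA -expr2 c2 divff // expf_neq0.
Qed.

Lemma ip_bb : ip (ruelle e) (ruelle e) = 2^-1.
Proof.
rewrite ruelle_e ipZl ?ipZr ?ip_hw //; try exact: L2hw; try exact: L2_scale (L2hw hmu _).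
rewrite mulrA -expr2 expr_div_n c2 /= exprS; field; exact: expf_neq0.
Qed.

Lemma ip_eb : ip e (ruelle e) = 0.
Proof.
rewrite ruelle_e e_hw ipZl ?ipZr; try exact: L2hw; try exact: L2_scale (L2hw hmu _).
rewrite /hw ip_lin_r; try exact: L2I; try exact: L2hw.
by rewrite !(ip_hw_I hmu) ?size_rcons //; ring.
Qed.

End W.
End Dual.


Section Dual2.
Variable R : realType.
Variable mu : {measure set Omega -> \bar R}.
Hypothesis hmu : forall v : seq bool, mu (cyl v) = ((2 : R) ^- size v)%:E.
Local Notation ip := (inner mu).
Local Notation L2 := (L2 mu).
Local Notation I v := (\1_(cyl v) : Omega -> R).

Lemma ip_Rint (f g : Omega -> R) : ip f g = Rintegral mu setT (fun x => f x * g x).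
Proof. by []. Qed.

Lemma Rint_ext (h1 h2 : Omega -> R) : (forall x, h1 x = h2 x) ->
  Rintegral mu setT h1 = Rintegral mu setT h2.
Proof. by move=> H; congr Rintegral; apply: funext. Qed.

Lemma koop_L2 (f : Omega -> R) : L2 f ->
  L2 (koopman f) /\ ip (koopman f) (koopman f) = ip f f.
Proof.
move=> [mf if2].
have mG : measurable_fun setT (fun x => (f x ^+ 2)%:E).
  by apply/measurable_EFinP; exact: measurable_funX.
have [+ H] := push_int shift_meas (mu_shift hmu) measurableT mG if2.
rewrite preimage_setT => i2.
have mK : measurable_fun setT (koopman f) by exact: measurableT_comp mf shift_meas.
split; first by split.
rewrite /inner.
rewrite (eq_integral (fun x => (f (shift x) ^+ 2)%:E)); last by move=> x _; rewrite expr2.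
rewrite [in RHS](eq_integral (fun x => (f x ^+ 2)%:E)); last by move=> x _; rewrite expr2.
by rewrite -H preimage_setT.
Qed.

Lemma ip0l (g : Omega -> R) : ip (fun=> 0) g = 0.
Proof.
rewrite /inner (eq_integral (fun=> 0%E)); first by rewrite integral0.
by move=> x _; rewrite mul0r.
Qed.

Lemma indic1 (a : bool) (y : Omega) : I [:: a] y = (y 0%N == a)%:R.
Proof.
rewrite indicE; case: eqP => H.
  by rewrite mem_set //; apply/cyl_cons; split.
by rewrite memNset // => /cyl_cons [].
Qed.

Section W2.
Variables (w1 : bool) (w' : seq bool).
Local Notation w := (w1 :: w').
Local Notation e := (@e_w R w).
Local Notation c := (Num.sqrt (2 ^+ size w) : R).

Lemma dualK (f : Omega -> R) : L2 f -> ip (koopman f) e = ip f (ruelle e).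
Proof.
move=> Lf.
have Lh : L2 (fun x => c * hw R w' x) by apply: L2_scale; exact: L2hw.
pose g := fun x => f x * (c * hw R w' x).
have ig : mu.-integrable setT (EFin \o g) by exact: L2_int Lf Lh.
have mg : measurable_fun setT g by apply: measurable_funM; [exact: Lf.1|exact: Lh.1].
rewrite ruelle_e !ip_Rint.
rewrite (Rint_ext (h2 := fun x => I [:: w1] x * g (shift x))); last first.
  by move=> x; rewrite /koopman e_split /g; ring.
rewrite int_half_real //.
rewrite [RHS](Rint_ext (h2 := fun x => 2^-1 * g x)); last by move=> x; rewrite /g /=; ring.
by rewrite RintegralZl // mulrC.
Qed.

Lemma pt_split (f : Omega -> R) (y : Omega) :
  f y * e (shift y) =
  I [:: false] y * (f (pcons false (shift y)) * e (shift y)) +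
  I [:: true] y * (f (pcons true (shift y)) * e (shift y)).
Proof.
rewrite !indic1; case hy: (y 0%N) => /=.
  by rewrite (pcons_shift hy); ring.
by rewrite (pcons_shift hy); ring.
Qed.

Lemma dualL (f : Omega -> R) : L2 f -> ip (ruelle f) e = ip f (koopman e).
Proof.
move=> Lf.
have Le := L2e hmu w1 w'.
pose G := fun a x => f (pcons a x) * e x.
have iG : forall a, mu.-integrable setT (EFin \o G a).
  by move=> a; exact: L2_int (L2_pcons hmu a Lf) Le.
have mG : forall a, measurable_fun setT (G a).
  by move=> a; apply: measurable_funM; [exact: (L2_pcons hmu a Lf).1|exact: Le.1].
have [h0 i0] := int_half_real2 hmu false (mG false) (iG false).
have [h1 i1] := int_half_real2 hmu true (mG true) (iG true).
rewrite !ip_Rint.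
rewrite [RHS](Rint_ext (h2 := fun y => I [:: false] y * G false (shift y) +
                                       I [:: true] y * G true (shift y))); last first.
  by move=> y; rewrite /koopman pt_split.
rewrite RintegralD // h0 h1.
rewrite (Rint_ext (h2 := fun x => 2^-1 * (G false x + G true x))); last first.
  by move=> x; rewrite /ruelle /G; ring.
rewrite RintegralZl ?RintegralD //; first by ring.
exact: (integrableD measurableT (iG false) (iG true)).
Qed.

End W2.
End Dual2.


Section Norms.
Variable R : realType.
Variable mu : {measure set Omega -> \bar R}.
Local Notation ip := (inner mu).
Local Notation L2 := (L2 mu).

Lemma sqrt_le1 (x : R) : 0 <= x -> (Num.sqrt x <= 1) = (x <= 1).
Proof. by move=> x0; rewrite -{1}sqrtr1 ler_sqrt. Qed.

Lemma opnorm_eq1 (T : (Omega -> R) -> (Omega -> R)) :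
  (forall f, L2 f -> L2 (T f) /\ ip (T f) (T f) <= ip f f) ->
  (exists f0, [/\ L2 f0, ip f0 f0 = 1 & ip (T f0) (T f0) = 1]) ->
  opnorm mu T = 1%E.
Proof.
move=> HT [f0 [L0 n0 t0]].
apply/eqP; rewrite eq_le; apply/andP; split.
  apply: ub_ereal_sup => _ [f [mf Nf] <-].
  have [Lf ff] := L2_of_norm mf Nf.
  have [LT le] := HT f Lf.
  rewrite L2norm_ip // lee_fin sqrt_le1 ?ip_ge0 //.
  exact: le_trans le ff.
apply: ereal_sup_ubound; exists f0.
  by split; [exact: L0.1|rewrite L2norm_ip // n0 sqrtr1].
by rewrite L2norm_ip ?t0 ?sqrtr1 //; exact: (HT f0 L0).1.
Qed.

Lemma L2norm_cases (f : Omega -> R) : measurable_fun [set: Omega] f ->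
  L2norm mu f = +oo%E \/ L2 f.
Proof.
move=> mf.
have mf2 : measurable_fun [set: Omega] (fun x => (f x ^+ 2)%:E).
  by apply/measurable_EFinP; exact: measurable_funX.
have ge0 : (0 <= \int[mu]_x ((f x) ^+ 2)%:E)%E.
  by apply: integral_ge0 => x _; rewrite lee_fin sqr_ge0.
have iL : (\int[mu]_x ((f x) ^+ 2)%:E < +oo)%E -> L2 f.
  move=> lt; split => //; apply/integrableP; split => //.
  rewrite (eq_integral (fun x => ((f x)^+2)%:E)) // => x _.
  by rewrite abse_EFin ger0_norm ?sqr_ge0.
case hI : (\int[mu]_x ((f x) ^+ 2)%:E)%E ge0 => [r| |] // r0.
  by right; apply: iL; rewrite hI ltry.
left; rewrite /L2norm unlock.
rewrite (eq_integral (fun x => ((f x)^+2)%:E)); last by move=> x _; exact: abs_pow2.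
by rewrite hI poweRyr.
Qed.

Lemma sqrtE2 (x : R) : 0 <= x -> ((Num.sqrt x)%:E `^ 2)%E = x%:E.
Proof.
by move=> x0; rewrite poweR_EFin powR_mulrn ?sqrtr_ge0 // sqr_sqrtr.
Qed.

Lemma Hnorm_L2 (f g : Omega -> R) : L2 f -> L2 g ->
  Hnorm mu (f, g) = (Num.sqrt (ip f f + ip g g))%:E.
Proof.
move=> Lf Lg; rewrite /Hnorm /= !L2norm_ip // !sqrtE2 ?ip_ge0 //.
by rewrite -EFinD poweR_EFin powR12_sqrt // addr_ge0 // ip_ge0.
Qed.

Lemma Hnorm_cases (p : (Omega -> R) * (Omega -> R)) :
  measurable_fun [set: Omega] p.1 -> measurable_fun [set: Omega] p.2 ->
  (Hnorm mu p <= 1)%E -> L2 p.1 /\ L2 p.2.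
Proof.
case: p => f g /= mf mg.
case: (L2norm_cases mf) => [Hf|Lf].
  rewrite /Hnorm /= Hf poweRyr // addye; last first.
    by rewrite gt_eqF // (lt_le_trans _ (poweR_ge0 _ _)) // ltNy0.
  by rewrite poweRyr // leye_eq.
case: (L2norm_cases mg) => [Hg|Lg] //.
rewrite /Hnorm /= Hg poweRyr // addey; last first.
  by rewrite gt_eqF // (lt_le_trans _ (poweR_ge0 _ _)) // ltNy0.
by rewrite poweRyr // leye_eq.
Qed.

End Norms.


Section Final.
Variable R : realType.
Variable mu : {measure set Omega -> \bar R}.
Hypothesis hmu : forall v : seq bool, mu (cyl v) = ((2 : R) ^- size v)%:E.
Local Notation ip := (inner mu).
Local Notation L2 := (L2 mu).
Variables (w1 : bool) (w' : seq bool).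
Local Notation w := (w1 :: w').
Local Notation e := (@e_w R w).
Local Notation a := (koopman e).
Local Notation b := (ruelle e).

Let Le : L2 e := L2e hmu w1 w'.
Let La : L2 a := (koop_L2 hmu Le).1.
Let Lb : L2 b := L2b hmu w1 w'.
Let ee : ip e e = 1 := ip_ee hmu w1 w'.
Let aa : ip a a = 1.
Proof. by rewrite (koop_L2 hmu Le).2. Qed.
Let bb : ip b b = 2^-1 := ip_bb hmu w1 w'.
Let eb : ip e b = 0 := ip_eb hmu w1 w'.
Let ae : ip a e = 0.
Proof. by rewrite (dualK hmu) // eb. Qed.

Lemma TK_eq (f : Omega -> R) : L2 f ->
  comm (@koopman R) (proj_e mu w) f = fun x => ip f e * a x + (- ip f b) * e x.
Proof.
move=> Lf; apply: funext => x; rewrite /comm /proj_e /koopman -(dualK hmu) //.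
by rewrite /koopman; ring.
Qed.

Lemma TL_eq (f : Omega -> R) : L2 f ->
  comm (@ruelle R) (proj_e mu w) f = fun x => ip f e * b x + (- ip f a) * e x.
Proof.
move=> Lf; apply: funext => x; rewrite /comm /proj_e -(dualL hmu) //.
by rewrite /ruelle; ring.
Qed.

Lemma TK_prop (f : Omega -> R) : L2 f ->
  L2 (comm (@koopman R) (proj_e mu w) f) /\
  ip (comm (@koopman R) (proj_e mu w) f) (comm (@koopman R) (proj_e mu w) f) =
  ip f e ^+ 2 + ip f b ^+ 2.
Proof.
move=> Lf; rewrite TK_eq //; split; first exact: L2_lin.
by rewrite ip_comb2 // aa ae ee; ring.
Qed.

Lemma TL_prop (f : Omega -> R) : L2 f ->
  L2 (comm (@ruelle R) (proj_e mu w) f) /\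
  ip (comm (@ruelle R) (proj_e mu w) f) (comm (@ruelle R) (proj_e mu w) f) =
  ip f e ^+ 2 / 2 + ip f a ^+ 2.
Proof.
move=> Lf; rewrite TL_eq //; split; first exact: L2_lin.
by rewrite ip_comb2 // bb (ip_sym mu b e) eb ee; ring.
Qed.

Lemma TK_le (f : Omega -> R) : L2 f ->
  L2 (comm (@koopman R) (proj_e mu w) f) /\
  ip (comm (@koopman R) (proj_e mu w) f) (comm (@koopman R) (proj_e mu w) f) <= ip f f.
Proof.
move=> Lf; have [L E] := TK_prop Lf; split => //; rewrite E.
have := bessel Lf Le Lb ee bb _ eb; rewrite invr_gt0 ltr0n => /(_ isT).
apply: le_trans; rewrite invrK lerD2l ler_peMr ?sqr_ge0 //; lra.
Qed.

Lemma TL_le (f : Omega -> R) : L2 f ->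
  L2 (comm (@ruelle R) (proj_e mu w) f) /\
  ip (comm (@ruelle R) (proj_e mu w) f) (comm (@ruelle R) (proj_e mu w) f) <= ip f f.
Proof.
move=> Lf; have [L E] := TL_prop Lf; split => //; rewrite E.
have := bessel Lf Le La ee aa ltr01 (etrans (ip_sym mu e a) ae).
apply: le_trans; rewrite divr1 lerD2r ler_pdivrMr // ler_peMr ?sqr_ge0 //; lra.
Qed.

Lemma normK : opnorm mu (comm (@koopman R) (proj_e mu w)) = 1%E.
Proof.
apply: opnorm_eq1; first exact: TK_le.
exists e; split => //; have [_ ->] := TK_prop Le.
by rewrite ee eb; ring.
Qed.

Lemma normL : opnorm mu (comm (@ruelle R) (proj_e mu w)) = 1%E.
Proof.
apply: opnorm_eq1; first exact: TL_le.
exists a; split => //; have [_ ->] := TL_prop La.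
by rewrite ae aa; ring.
Qed.

Lemma normD : opnormH mu (Dcomm (proj_e mu w)) = 1%E.
Proof.
have DE : forall p, Dcomm (proj_e mu w) p =
   (comm (@koopman R) (proj_e mu w) p.2, comm (@ruelle R) (proj_e mu w) p.1) by [].
apply/eqP; rewrite eq_le; apply/andP; split.
  apply: ub_ereal_sup => _ [p [m1 m2 Hp] <-].
  have [L1 L2'] := Hnorm_cases m1 m2 Hp.
  move: Hp; case: p m1 m2 L1 L2' => f g /= m1 m2 L1 L2'.
  rewrite DE /= !Hnorm_L2 //; try exact: (TK_le L2').1; try exact: (TL_le L1).1.
  rewrite !lee_fin !sqrt_le1 ?addr_ge0 ?ip_ge0 // => H.
  apply: le_trans H. have X := (TL_le L1).2. have Y := (TK_le L2').2. rewrite [leRHS]addrC; exact: lerD Y X.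
apply: ereal_sup_ubound; exists (fun=> 0, e).
  split => //=; first exact: Le.1.
  by rewrite Hnorm_L2 //; [rewrite ip0l ee add0r sqrtr1|exact: L2_cst0].
rewrite DE /= Hnorm_L2; last exact: (TL_le (L2_cst0 mu)).1.
  2: exact: (TK_le Le).1.
have [_ ->] := TK_prop Le; have [_ ->] := TL_prop (L2_cst0 mu).
by rewrite ee eb !ip0l expr0n /= mul0r !addr0 expr1n sqrtr1.
Qed.

End Final.

Theorem theorem2p4 (R : realType) (mu : {measure set Omega -> \bar R})
  (hmu : forall v : seq bool, mu (cyl v) = ((2 : R) ^- size v)%:E)
  (w : seq bool) (hw : (2 <= size w)%N) :
  [/\ opnorm mu (comm (@koopman R) (proj_e mu w)) = 1%E,
      opnorm mu (comm (@ruelle R) (proj_e mu w)) = 1%E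
    & opnormH mu (Dcomm (proj_e mu w)) = 1%E].
Proof.
case: w hw => [//|w1 w'] _.
by split; [exact: normK|exact: normL|exact: normD].
Qed.
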